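(* Let $A,B$ be two sets of size $r$, and let $\sigma:A\to B$ be a uniformly random bijection. Let $A_1,\dots,A_k\subseteq A'\subseteq A$ and $B_1,\dots,B_k\subseteq B'\subseteq B$. Then the function $$t\mapsto P\left[\bigwedge_{i=1}^k\left[\sigma(A_i)\neq B_i\right]\ \Bigm|\ |\sigma(A')\setminus B'|=t\right]$$ is nondecreasing in $t$ (over those $t$ for which the conditioning event has nonzero probability).
   Context: $\sigma(A_i)$ denotes the image set $\{\sigma(a):a\in A_i\}$. *)

(* Defs.v *)
From mathcomp Require Import all_boot all_order all_algebra.
Set Implicit Arguments. Unset Strict Implicit. Unset Printing Implicit Defensive.
Import Order.TTheory GRing.Theory Num.Theory.
Local Open Scope ring_scope.

Definition is_bij (A B : finType) (f : {ffun A -> B}) : bool :=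
  injectiveb f && [forall b : B, exists a : A, f a == b].

(* The sample space: all bijections A -> B (uniform measure = counting). *)
Definition bijs (A B : finType) : {set {ffun A -> B}} := [set f | is_bij f].

Definition avoid_event (A B : finType) (k : nat)
  (As : 'I_k -> {set A}) (Bs : 'I_k -> {set B}) : {set {ffun A -> B}} :=
  [set f in bijs A B | [forall i : 'I_k, f @: As i != Bs i]].

Definition cond_event (A B : finType) (A' : {set A}) (B' : {set B}) (t : nat)
  : {set {ffun A -> B}} :=
  [set f in bijs A B | #|(f @: A') :\: B'| == t].

Definition cond_prob (A B : finType) (E C : {set {ffun A -> B}}) : rat :=
  (#|E :&: C|%:R / #|C|%:R)%R.

(* Main.v *)
Require Import Defs.
From mathcomp Require Import all_boot all_order all_algebra all_fingroup.
From mathcomp Require Import zify.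
Import Order.TTheory GRing.Theory Num.Theory.
Set Implicit Arguments. Unset Strict Implicit.

Definition cnt (A B : finType) (f : {ffun A -> B}) (S : {set A}) (C : {set B}) :=
  #|[set z in S | f z \in C]|.

Definition swp (A B : finType) (f : {ffun A -> B}) (x y : A) : {ffun A -> B} :=
  [ffun z => f (tperm x y z)].

Lemma swpK (A B : finType) (f : {ffun A -> B}) x y : swp (swp f x y) x y = f.
Proof. by apply/ffunP => z; rewrite !ffunE tpermK. Qed.

Lemma swpx (A B : finType) (f : {ffun A -> B}) x y : swp f x y x = f y.
Proof. by rewrite ffunE tpermL. Qed.
Lemma swpy (A B : finType) (f : {ffun A -> B}) x y : swp f x y y = f x.
Proof. by rewrite ffunE tpermR. Qed.
Lemma swpD (A B : finType) (f : {ffun A -> B}) x y z : z != x -> z != y -> swp f x y z = f z.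
Proof. by move=> zx zy; rewrite ffunE tpermD // eq_sym. Qed.

Lemma bij_inj (A B : finType) (f : {ffun A -> B}) : is_bij f -> injective f.
Proof. by case/andP => /injectiveP. Qed.

Lemma bij_surj (A B : finType) (f : {ffun A -> B}) : is_bij f -> forall b, exists a, f a = b.
Proof. by case/andP => _ /forallP h b; have /existsP[a /eqP] := h b; exists a. Qed.

Lemma bij_swp (A B : finType) (f : {ffun A -> B}) x y : is_bij f -> is_bij (swp f x y).
Proof.
move=> bf; apply/andP; split.
  apply/injectiveP => u v; rewrite !ffunE => /(bij_inj bf) /(can_inj (tpermK x y)) //.
apply/forallP => b; have [a fa] := bij_surj bf b; apply/existsP; exists (tperm x y a).
by rewrite ffunE tpermK fa.
Qed.

Lemma bij_swpE (A B : finType) (f : {ffun A -> B}) x y : is_bij (swp f x y) = is_bij f.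
Proof.
apply/idP/idP; last exact: bij_swp.
by move/(bij_swp x y); rewrite swpK.
Qed.

Lemma cnt_img (A B : finType) (f : {ffun A -> B}) S C : injective f ->
  cnt f S C = #|f @: S :&: C|.
Proof.
move=> inj; rewrite /cnt -(card_imset _ inj); apply: eq_card => b.
rewrite !inE; apply/imsetP/andP.
  by case=> z; rewrite inE => /andP[zS fzC] ->; split => //; apply: imset_f.
by case=> /imsetP[z zS ->] fzC; exists z; rewrite // inE zS.
Qed.

Lemma cnt_splitC (A B : finType) (f : {ffun A -> B}) S C :
  cnt f S C + cnt f S (~: C) = #|S|.
Proof.
rewrite /cnt -(cardsID [set z | f z \in C] S); congr (_ + _); apply: eq_card => z; by rewrite !inE; case: (z \in S); case: (f z \in C).
Qed.

Lemma imsetT_bij (A B : finType) (f : {ffun A -> B}) : is_bij f -> f @: setT = setT.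
Proof.
move=> bf; apply/setP => b; rewrite inE; have [a <-] := bij_surj bf b.
by apply: imset_f; rewrite inE.
Qed.

Lemma cnt_splitA (A B : finType) (f : {ffun A -> B}) S C : is_bij f ->
  cnt f S C + cnt f (~: S) C = #|C|.
Proof.
move=> bf.
have -> : #|C| = cnt f setT C by rewrite (cnt_img _ _ (bij_inj bf)) imsetT_bij // setTI.
rewrite /cnt -(cardsID S [set z in setT | f z \in C]); congr (_ + _); apply: eq_card => z; by rewrite !inE; case: (z \in S); case: (f z \in C).
Qed.

Lemma sum_bool (T : finType) (P : pred T) : \sum_(i : T) (P i : nat) = #|[set i | P i]|.
Proof.
rewrite -sum1_card [in RHS]big_mkcond /=; apply: eq_bigr => i _; rewrite inE; by case: (P i).
Qed.

Lemma sum_const_on (T : finType) (c : pred T) (g : T -> nat) K :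
  (forall f, c f -> g f = K) -> \sum_(f : T) c f * g f = #|[set f | c f]| * K.
Proof.
move=> h; rewrite (eq_bigr (fun f => c f * K)) => [|f _]; last first.
  by case E: (c f) => //=; rewrite h.
by rewrite -big_distrl /= sum_bool.
Qed.

Lemma sum3 (T U V : finType) (c : pred T) (X : T -> pred U) (Y : T -> pred V) :
  \sum_(p : T * U * V) ((c p.1.1 && X p.1.1 p.1.2) && Y p.1.1 p.2 : nat)
  = \sum_(f : T) c f * (#|[set x | X f x]| * #|[set y | Y f y]|).
Proof.
transitivity (\sum_(q : T * U) \sum_(y : V) ((c q.1 && X q.1 q.2) && Y q.1 y : nat)).
  by rewrite pair_big /=; apply: eq_bigr => -[[f x] y].
transitivity (\sum_(f : T) \sum_(x : U) \sum_(y : V) ((c f && X f x) && Y f y : nat)).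
  by rewrite [in RHS]pair_big /=; apply: eq_bigr => -[f x].
apply: eq_bigr => f _.
rewrite (eq_bigr (fun x => (c f && X f x) * #|[set y | Y f y]|)) => [|x _]; last first.
  by rewrite -sum_bool big_distrr /=; apply: eq_bigr => y _; rewrite mulnb.
rewrite -big_distrl /= (eq_bigr (fun x => c f * X f x)) => [|x _]; last by rewrite mulnb.
by rewrite -big_distrr /= sum_bool mulnA.
Qed.

Lemma cond_cnt (A B : finType) (A' : {set A}) (B' : {set B}) (f : {ffun A -> B}) t :
  (f \in cond_event A' B' t) = is_bij f && (cnt f A' (~: B') == t).
Proof.
rewrite /cond_event /bijs !inE; case bf: (is_bij f) => //=.
by rewrite (cnt_img _ _ (bij_inj bf)) -setDE.
Qed.

Lemma cnt_swp (A B : finType) (A' : {set A}) (B' : {set B}) (f : {ffun A -> B}) x y :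
  x \in A' -> f x \in B' -> y \notin A' -> f y \notin B' ->
  cnt (swp f x y) A' (~: B') = (cnt f A' (~: B')).+1.
Proof.
move=> xA fx yA fy; rewrite /cnt.
have -> : [set z in A' | swp f x y z \in ~: B'] = x |: [set z in A' | f z \in ~: B'].
  apply/setP => z; rewrite !inE.
  have [->|zx] := eqVneq z x; first by rewrite swpx xA fy.
  have [->|zy] := eqVneq z y; first by rewrite (negbTE yA).
  by rewrite swpD.
by rewrite cardsU1 !inE xA fx.
Qed.

Lemma cond_swp (A B : finType) (A' : {set A}) (B' : {set B}) (f : {ffun A -> B}) x y t :
  x \in A' -> f x \in B' -> y \notin A' -> f y \notin B' ->
  (swp f x y \in cond_event A' B' t.+1) = (f \in cond_event A' B' t).
Proof. by move=> *; rewrite !cond_cnt bij_swpE cnt_swp // eqSS. Qed.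

Lemma avoid_swp (A B : finType) (A' : {set A}) (B' : {set B}) k
  (As : 'I_k -> {set A}) (Bs : 'I_k -> {set B})
  (hAs : forall i, As i \subset A') (hBs : forall i, Bs i \subset B')
  (f : {ffun A -> B}) x y :
  x \in A' -> y \notin A' -> f y \notin B' ->
  f \in avoid_event As Bs -> swp f x y \in avoid_event As Bs.
Proof.
move=> xA yA fy; rewrite /avoid_event /bijs !inE => /andP[bf /forallP h].
rewrite bij_swp //=; apply/forallP => i; apply: contra (h i) => /eqP e.
rewrite -e; apply/eqP; apply: eq_in_imset => z zA.
have zA' : z \in A' by apply: (subsetP (hAs i)).
have zy : z != y by apply: contraNneq yA => <-.
have zx : z != x.
  have : swp f x y z \in Bs i by rewrite -e imset_f.
  move/(subsetP (hBs i)); apply: contraTneq => ->; by rewrite swpx.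
by rewrite swpD.
Qed.

Lemma leq_bool (b1 b2 : bool) : (b1 -> b2) -> b1 <= b2.
Proof. by case: b1; case: b2 => // /(_ isT). Qed.

Definition phi (A B : finType) (p : {ffun A -> B} * A * A) : {ffun A -> B} * A * A :=
  (swp p.1.1 p.1.2 p.2, p.1.2, p.2).

Lemma phiK (A B : finType) : involutive (@phi A B).
Proof. by move=> [[f x] y]; rewrite /phi /= swpK. Qed.

Lemma step_eqs (A B : finType) (A' : {set A}) (B' : {set B}) k
  (As : 'I_k -> {set A}) (Bs : 'I_k -> {set B})
  (hAs : forall i, As i \subset A') (hBs : forall i, Bs i \subset B') t :
  let N t := #|cond_event A' B' t| in
  let Bd t := #|cond_event A' B' t :\: avoid_event As Bs| in
  let d1 := (#|A'| - t) * (#|~: B'| - t) in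
  let d2 := t.+1 * (#|B'| - (#|A'| - t.+1)) in
  N t * d1 = N t.+1 * d2 /\ Bd t.+1 * d2 <= Bd t * d1.
Proof.
move=> N Bd d1 d2.
pose X1 (f : {ffun A -> B}) x := (x \in A') && (f x \in B').
pose Y1 (f : {ffun A -> B}) y := (y \in ~: A') && (f y \in ~: B').
pose X2 (f : {ffun A -> B}) x := (x \in A') && (f x \in ~: B').
pose Y2 (f : {ffun A -> B}) y := (y \in ~: A') && (f y \in B').
pose Ph (c : pred {ffun A -> B}) X Y (p : {ffun A -> B} * A * A) :=
  (c p.1.1 && X p.1.1 p.1.2) && Y p.1.1 p.2.
have S1 : forall c : pred {ffun A -> B}, (forall f, c f -> f \in cond_event A' B' t) ->
    \sum_p (Ph c X1 Y1 p : nat) = #|[set f | c f]| * d1.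
  move=> c hc; rewrite sum3; apply: sum_const_on => f /hc.
  rewrite cond_cnt => /andP[bf /eqP ct].
  have e1 := cnt_splitC f A' B'; have e2 := cnt_splitA A' (~: B') bf.
  have -> : #|[set x | X1 f x]| = cnt f A' B' by apply: eq_card => x; rewrite !inE.
  have -> : #|[set y | Y1 f y]| = cnt f (~: A') (~: B') by apply: eq_card => x; rewrite !inE.
  rewrite /d1; congr (_ * _); lia.
have S2 : forall c : pred {ffun A -> B}, (forall f, c f -> f \in cond_event A' B' t.+1) ->
    \sum_p (Ph c X2 Y2 p : nat) = #|[set f | c f]| * d2.
  move=> c hc; rewrite sum3; apply: sum_const_on => f /hc.
  rewrite cond_cnt => /andP[bf /eqP ct].
  have e1 := cnt_splitC f A' B'; have e2 := cnt_splitA A' B' bf.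
  have -> : #|[set x | X2 f x]| = cnt f A' (~: B') by apply: eq_card => x; rewrite !inE.
  have -> : #|[set y | Y2 f y]| = cnt f (~: A') B' by apply: eq_card => x; rewrite !inE.
  rewrite /d2; congr (_ * _); lia.
have phinj : injective (@phi A B) := can_inj (@phiK A B).
have R : forall c : pred {ffun A -> B},
    \sum_p (Ph c X2 Y2 p : nat) = \sum_p (Ph c X2 Y2 (phi p) : nat).
  by move=> c; rewrite (reindex_inj phinj).
have P1 : forall p, Ph (fun f => f \in cond_event A' B' t.+1) X2 Y2 (phi p)
                  = Ph (fun f => f \in cond_event A' B' t) X1 Y1 p.
  move=> [[f x] y]; rewrite /Ph /X1 /Y1 /X2 /Y2 /phi /= swpx swpy !in_setC.
  case xA: (x \in A'); case fx: (f x \in B'); case yA: (y \in A'); case fy: (f y \in B');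
    rewrite /= ?andbF ?andbT //.
  by rewrite cond_swp ?xA ?fx ?yA ?fy.
have P2 : forall p, Ph (fun f => f \in cond_event A' B' t.+1 :\: avoid_event As Bs) X2 Y2 (phi p)
                  <= Ph (fun f => f \in cond_event A' B' t :\: avoid_event As Bs) X1 Y1 p.
  move=> [[f x] y]; apply: leq_bool; rewrite /Ph /X1 /Y1 /X2 /Y2 /phi /= swpx swpy !in_setD !in_setC.
  case/andP => /andP[/andP[nav cs] /andP[xA fy]] /andP[yA fx].
  rewrite xA fy yA fx /= andbT.
  rewrite cond_swp // in cs; rewrite cs andbT.
  rewrite andbT; apply: contra nav; exact: avoid_swp.
split.
  have := S1 _ (fun f (h : f \in cond_event A' B' t) => h).
  have := S2 _ (fun f (h : f \in cond_event A' B' t.+1) => h).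
  rewrite R; under eq_bigr => p _ do rewrite P1.
  move=> -> h.
  have eN : forall s, #|[set f | f \in cond_event A' B' s]| = N s.
    by move=> s; apply: eq_card => f; rewrite inE.
  by rewrite -!eN -h.
have h1 := S1 (fun f => f \in cond_event A' B' t :\: avoid_event As Bs)
  (fun f h => (subsetP (subsetDl _ _) f h)).
have h2 := S2 (fun f => f \in cond_event A' B' t.+1 :\: avoid_event As Bs)
  (fun f h => (subsetP (subsetDl _ _) f h)).
have eB : forall s, #|[set f | f \in cond_event A' B' s :\: avoid_event As Bs]| = Bd s.
  by move=> s; apply: eq_card => f; rewrite inE.
rewrite eB in h1; rewrite eB in h2.
rewrite -h1 -h2 R; exact: leq_sum.
Qed.

Lemma pos_fact (A B : finType) (A' : {set A}) (B' : {set B}) t f :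
  f \in cond_event A' B' t ->
  [/\ t <= #|A'|, t <= #|~: B'| & #|A'| <= #|B'| + t].
Proof.
rewrite cond_cnt => /andP[bf /eqP ct].
have e1 := cnt_splitC f A' B'; have e2 := cnt_splitA A' (~: B') bf.
have e3 := cnt_splitA A' B' bf.
split; lia.
Qed.

Lemma cross (N0 N1 B0 B1 d1 d2 : nat) :
  N0 * d1 = N1 * d2 -> B1 * d2 <= B0 * d1 -> 0 < d2 -> B1 * N0 <= B0 * N1.
Proof.
move=> e1 e2 d2pos; rewrite -(leq_pmul2r d2pos).
apply: (@leq_trans (B0 * d1 * N0)).
  by rewrite mulnAC leq_mul2r e2 orbT.
by rewrite -mulnA [d1 * N0]mulnC e1 mulnA.
Qed.

Lemma chain_ar (B2 N0 B0 N2 B1 N1 : nat) :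
  0 < N1 -> B2 * N1 <= B1 * N2 -> B1 * N0 <= B0 * N1 -> B2 * N0 <= B0 * N2.
Proof.
move=> pM IH1 S; rewrite -(leq_pmul2r pM).
apply: (@leq_trans (B1 * N2 * N0)).
  by rewrite mulnAC leq_mul2r IH1 orbT.
by rewrite mulnAC [X in _ <= X]mulnAC leq_mul2r S orbT.
Qed.

Lemma main_nat (A B : finType) (A' : {set A}) (B' : {set B}) k
  (As : 'I_k -> {set A}) (Bs : 'I_k -> {set B})
  (hAs : forall i, As i \subset A') (hBs : forall i, Bs i \subset B') t1 t2 :
  let N t := #|cond_event A' B' t| in
  let Bd t := #|cond_event A' B' t :\: avoid_event As Bs| in
  t1 <= t2 -> 0 < N t1 -> 0 < N t2 -> Bd t2 * N t1 <= Bd t1 * N t2.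
Proof.
move=> N Bd le12 p1 p2.
have [g gin] : exists g, g \in cond_event A' B' t2.
  by move: p2; rewrite /N card_gt0 => /set0Pn.
have [ga gb _] := pos_fact gin.
have step : forall t, Bd t.+1 * N t <= Bd t * N t.+1.
  move=> t; have [e1 e2] := step_eqs hAs hBs t.
  have [N0|Npos] := posnP (N t); first by rewrite N0 muln0.
  have [f fin] : exists f, f \in cond_event A' B' t.
    by move: Npos; rewrite /N card_gt0 => /set0Pn.
  have [fa fb fc] := pos_fact fin.
  have [N1|N1pos] := posnP (N t.+1).
    have : Bd t.+1 <= N t.+1 by apply: subset_leq_card; apply: subsetDl.
    by rewrite N1 leqn0 => /eqP ->.
  have [h hin] : exists h, h \in cond_event A' B' t.+1.
    by move: N1pos; rewrite /N card_gt0 => /set0Pn.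
  have [ha hb hc] := pos_fact hin.
  apply: (cross e1 e2); rewrite muln_gt0; apply/andP; split; lia.
suff H : forall d t1, t1 + d = t2 -> 0 < N t1 -> Bd t2 * N t1 <= Bd t1 * N t2.
  by apply: (H (t2 - t1)) => //; rewrite subnKC.
clear p1 le12; elim=> [|d IH] s e p1.
  by rewrite addn0 in e; rewrite e mulnC.
have [e1 _] := step_eqs hAs hBs s.
have pM : 0 < N s.+1.
  have : 0 < N s * ((#|A'| - s) * (#|~: B'| - s)).
    rewrite muln_gt0 p1 muln_gt0 /=; apply/andP; split; lia.
  by rewrite e1 muln_gt0 => /andP[].
have IH1 : Bd t2 * N s.+1 <= Bd s.+1 * N t2 by apply: IH => //; rewrite addSnnS.
exact: (chain_ar pM IH1 (step s)).
Qed.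

Local Open Scope ring_scope.

Theorem lemma4 (A B : finType) (r k : nat) (HA : #|A| = r) (HB : #|B| = r)
  (As : 'I_k -> {set A}) (Bs : 'I_k -> {set B}) (A' : {set A}) (B' : {set B})
  (hAs : forall i, As i \subset A') (hBs : forall i, Bs i \subset B')
  (t1 t2 : nat) :
  (t1 <= t2)%N ->
  (0 < #|cond_event A' B' t1|)%N -> (0 < #|cond_event A' B' t2|)%N ->
  cond_prob (avoid_event As Bs) (cond_event A' B' t1)
    <= cond_prob (avoid_event As Bs) (cond_event A' B' t2).
Proof.
move=> le12 p1 p2.
have H := main_nat hAs hBs le12 p1 p2.
rewrite /cond_prob ler_pdivrMr ?ltr0n // mulrAC ler_pdivlMr ?ltr0n // -!natrM ler_nat.
have c1 := cardsID (avoid_event As Bs) (cond_event A' B' t1).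
have c2 := cardsID (avoid_event As Bs) (cond_event A' B' t2).
rewrite !(setIC (avoid_event As Bs)).
rewrite -c1 -c2 in H *; nia.
Qed.
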